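(* Consider the distributed energy beamforming setting and protocol described in the context, with $M\ge 2$ energy transmitters, channel power gains $\beta_1,\dots,\beta_M>0$, channel phases $\theta_1,\dots,\theta_M\in[-\pi,\pi)$, transmit power $P>0$, and $N\ge 1$ feedback intervals per transmitter. Let $\bar\phi_1,\dots,\bar\phi_M$ be the phases produced by the protocol, let $$Q_{\mathrm d}=P\Big(\sum_{m=1}^M\beta_m+\sum_{i,j=1,\,i\neq j}^M\sqrt{\beta_i\beta_j}\cos\big((\bar\phi_i-\theta_i)-(\bar\phi_j-\theta_j)\big)\Big),\qquad Q^\star=P\Big(\sum_{m=1}^M\beta_m+\sum_{i,j=1,\,i\neq j}^M\sqrt{\beta_i\beta_j}\Big),$$ and $\eta=Q_{\mathrm d}/Q^\star$. Then $$\eta\ \ge\ \frac{P}{Q^\star}\left(\sum_{m=1}^M\beta_m+\sum_{i,j=1,\,i\neq j}^M\sqrt{\beta_i\beta_j}\,\cos^2\!\Big(\frac{\pi}{2^N}\Big)\right).$$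
   Context: Setting: $M$ single-antenna energy transmitters ET$_1,\dots,$ET$_M$ send power to one energy receiver (ER). If ET$_m$ transmits with phase $\phi_m$ (each with power $P$), the harvested power at the ER is $Q(\phi_1,\dots,\phi_M)=P\big|\sum_{m}\sqrt{\beta_m}e^{\mathrm{i}(\phi_m-\theta_m)}\big|^2=P\big(\sum_m\beta_m+\sum_{i\ne j}\sqrt{\beta_i\beta_j}\cos((\phi_i-\theta_i)-(\phi_j-\theta_j))\big)$, where idle transmitters contribute nothing. The phases $\theta_m$ are unknown to the transmitters. Protocol: ET$_1$ transmits with fixed phase $\bar\phi_1=0$. Then for $m=2,\dots,M$ in turn, with ET$_1,\dots,$ET$_{m-1}$ transmitting with their fixed phases $\bar\phi_1,\dots,\bar\phi_{m-1}$ and ET$_{m+1},\dots,$ET$_M$ idle, ET$_m$ runs algorithm (A1) below and thereafter transmits with the resulting phase $\bar\phi_m$. Here $Q_m(\phi)=P\big|\sqrt{\beta_m}e^{\mathrm{i}(\phi-\theta_m)}+\sum_{i=1}^{m-1}\sqrt{\beta_i}e^{\mathrm{i}(\bar\phi_i-\theta_i)}\big|^2$ is the harvested power when ET$_m$ uses phase $\phi$. Algorithm (A1) for ET$_m$: initialize $\mathcal A^{(1)}=[-\pi,\pi)$, $\psi=0$, $\psi'=-\pi$. For $n=1,\dots,N$: ET$_m$ transmits with phase $\psi$ and then with phase $\psi'$; the ER feeds back one bit indicating whether $Q_m(\psi)>Q_m(\psi')$ (power measurements assumed exact). If $Q_m(\psi)>Q_m(\psi')$, set $\mathcal A^{(n+1)}=\mathcal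 A^{(n)}\setminus\{\theta\in[-\pi,\pi):\cos(\theta-\psi)<\cos(\theta-\psi')\}$; otherwise set $\mathcal A^{(n+1)}=\mathcal A^{(n)}\setminus\{\theta\in[-\pi,\pi):\cos(\theta-\psi)>\cos(\theta-\psi')\}$. Then set $\psi=\max_{\theta\in\mathcal A^{(n+1)}}\theta$ and $\psi'=\min_{\theta\in\mathcal A^{(n+1)}}\theta$. After the $N$ intervals, output $\bar\phi_m=(\psi+\psi')/2$. *)

(* Defs.v *)
From Stdlib Require Import Reals ZArith.
Open Scope R_scope.

(* rsum n f = f 1 + f 2 + ... + f n  (indices start at 1, as in the paper) *)
Fixpoint rsum (n : nat) (f : nat -> R) : R :=
  match n with
  | O => 0
  | S k => rsum k f + f (S k)
  end.

(* Q_m(phi) = P | sqrt(beta_m) e^{i(phi - theta_m)}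
                 + sum_{i=1}^{m-1} sqrt(beta_i) e^{i(phibar_i - theta_i)} |^2,
   written out as (real part)^2 + (imaginary part)^2. *)
Definition Qm (P : R) (beta theta phibar : nat -> R) (m : nat) (phi : R) : R :=
  P * ( (sqrt (beta m) * cos (phi - theta m)
           + rsum (m - 1) (fun i => sqrt (beta i) * cos (phibar i - theta i))) ^ 2
      + (sqrt (beta m) * sin (phi - theta m)
           + rsum (m - 1) (fun i => sqrt (beta i) * sin (phibar i - theta i))) ^ 2 ).

(* theta lies (modulo 2 pi) on the counterclockwise arc from a to b *)
Definition in_arc (a b theta : R) : Prop :=
  exists k : Z, a <= theta + 2 * IZR k * PI <= b.

(* A n is the candidate set A^{(n)} (a subset of
   [-pi,pi)); psi n, psi' n are the values of psi, psi' used in interval n.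
   For n >= 2, "psi = max A, psi' = min A" is read on the circle: psi' and psi
   are the start and end points (counterclockwise) of the arc A^{(n)}. *)
Definition A1_output (Q : R -> R) (N : nat) (out : R) : Prop :=
  exists (A : nat -> R -> Prop) (psi psi' : nat -> R),
    (forall th, A 1%nat th <-> -PI <= th < PI) /\
    psi 1%nat = 0 /\ psi' 1%nat = - PI /\
    (forall n : nat, (1 <= n <= N)%nat ->
       (Q (psi n) > Q (psi' n) ->
          forall th, A (S n) th <-> (A n th /\ ~ (cos (th - psi n) < cos (th - psi' n)))) /\
       (~ (Q (psi n) > Q (psi' n)) ->
          forall th, A (S n) th <-> (A n th /\ ~ (cos (th - psi n) > cos (th - psi' n)))) /\
       psi' (S n) <= psi (S n) < psi' (S n) + 2 * PI /\
       (forall th, A (S n) th <-> (-PI <= th < PI /\ in_arc (psi' (S n)) (psi (S n)) th))) /\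
    out = (psi (S N) + psi' (S N)) / 2.

Definition protocol (M N : nat) (P : R) (beta theta phibar : nat -> R) : Prop :=
  phibar 1%nat = 0 /\
  forall m : nat, (2 <= m <= M)%nat ->
    A1_output (Qm P beta theta phibar m) N (phibar m).

Definition offdiag_sum (M : nat) (g : nat -> nat -> R) : R :=
  rsum M (fun i => rsum M (fun j => if Nat.eqb i j then 0 else g i j)).

Definition Qd (M : nat) (P : R) (beta theta phibar : nat -> R) : R :=
  P * (rsum M beta
       + offdiag_sum M (fun i j => sqrt (beta i * beta j) *
            cos ((phibar i - theta i) - (phibar j - theta j)))).

Definition Qstar (M : nat) (P : R) (beta : nat -> R) : R :=
  P * (rsum M beta + offdiag_sum M (fun i j => sqrt (beta i * beta j))).

(* Main.v *)
Require Import Defs.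
From Stdlib Require Import Reals ZArith Lra Lia Psatz.
Open Scope R_scope.

Lemma cosZ x k : cos (x + 2 * IZR k * PI) = cos x.
Proof.
  destruct (Z_le_gt_dec 0 k) as [Hk|Hk].
  - rewrite <- (Z2Nat.id k Hk), <- INR_IZR_INZ. apply cos_period.
  - assert (E : k = (- Z.of_nat (Z.to_nat (- k)))%Z) by lia.
    rewrite E, opp_IZR, <- INR_IZR_INZ.
    rewrite <- (cos_period (x + 2 * - INR (Z.to_nat (- k)) * PI) (Z.to_nat (-k))).
    f_equal. ring.
Qed.

Lemma reduce y : exists k : Z, -PI <= y + 2 * IZR k * PI < PI.
Proof.
  pose proof PI_RGT_0 as Hpi.
  set (r := (y + PI) / (2 * PI)).
  destruct (archimed r) as [H1 H2].
  exists (- (up r - 1))%Z. rewrite opp_IZR, minus_IZR.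
  assert (Hr : r * (2*PI) = y + PI) by (unfold r; field; lra).
  split; nra.
Qed.

Lemma in_arc_self a b : a <= b -> -PI <= a < PI -> in_arc a b a.
Proof. intros. exists 0%Z. simpl. lra. Qed.

Lemma arc_len a b a' b' :
  a <= b < a + 2 * PI -> 0 <= b' - a' < 2 * PI ->
  (forall x, -PI <= x < PI -> in_arc a b x -> in_arc a' b' x) ->
  b - a <= b' - a'.
Proof.
  intros Hab Hab' Hsub.
  pose proof PI_RGT_0 as Hpi.
  destruct (Rle_or_lt (b - a) (b' - a')) as [|Hlt]; [assumption|exfalso].
  destruct (reduce a) as [ka Hka].
  destruct (Hsub _ Hka) as [j Hj].
  { exists (- ka)%Z. rewrite opp_IZR. lra. }
  set (u := a + 2 * IZR ka * PI + 2 * IZR j * PI - a').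
  set (L' := b' - a'). set (l := b - a).
  set (d := Rmin (l - L' + u) (2*PI - L') / 2).
  assert (Hd1 : 0 < d).
  { unfold d, Rmin. destruct (Rle_dec _ _); unfold u, L', l in *; lra. }
  assert (Hd2 : d <= (l - L' + u)/2) by (unfold d; pose proof (Rmin_l (l - L' + u) (2*PI - L')); lra).
  assert (Hd3 : d <= (2*PI - L')/2) by (unfold d; pose proof (Rmin_r (l - L' + u) (2*PI - L')); lra).
  set (s := L' - u + d).
  destruct (reduce (a + s)) as [ky Hky].
  destruct (Hsub _ Hky) as [i Hi].
  { exists (- ky)%Z. rewrite opp_IZR. unfold s, u, L', l in *. lra. }
  assert (Heq : a + s + 2 * IZR ky * PI + 2 * IZR i * PI
               = a' + L' + d + 2 * IZR (ky + i - ka - j) * PI).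
  { rewrite !minus_IZR, plus_IZR. unfold s, u. ring. }
  rewrite Heq in Hi.
  destruct (Z_le_gt_dec 0 (ky + i - ka - j)) as [Hz|Hz].
  - apply IZR_le in Hz. unfold L' in *. nra.
  - assert (Hz' : (ky + i - ka - j <= -1)%Z) by lia. apply IZR_le in Hz'.
    unfold L' in *. nra.
Qed.

Lemma half_step p p' x : 0 <= p - p' <= PI -> in_arc p' p x ->
  (~ (cos (x - p) < cos (x - p')) -> in_arc (p' + (p - p') / 2) p x) /\
  (~ (cos (x - p) > cos (x - p')) -> in_arc p' (p' + (p - p') / 2) x).
Proof.
  intros HL [k Hk].
  set (L := p - p') in *. set (s := x + 2 * IZR k * PI - p').
  assert (E1 : cos (x - p) = cos (L - s)).
  { rewrite <- (cosZ (x - p) k), <- cos_neg. f_equal. unfold L, s. ring. }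
  assert (E2 : cos (x - p') = cos s).
  { rewrite <- (cosZ (x - p') k). f_equal. unfold s. ring. }
  rewrite E1, E2. split; intro H.
  - exists k. split; [|lra].
    destruct (Rle_or_lt (L/2) s) as [|Hs]; [unfold s in *; lra|].
    exfalso. apply H. apply cos_decreasing_1; unfold s in *; lra.
  - exists k. split; [lra|].
    destruct (Rle_or_lt s (L/2)) as [|Hs]; [unfold s in *; lra|].
    exfalso. apply H. unfold Rgt. apply (cos_decreasing_1 (L - s) s); unfold s, L in *; lra.
Qed.

Lemma first_step x : -PI <= x < PI ->
  (~ (cos (x - 0) < cos (x - - PI)) -> in_arc (- (PI/2)) (PI/2) x) /\
  (~ (cos (x - 0) > cos (x - - PI)) -> in_arc (PI/2) (PI/2 + PI) x).
Proof.
  intro Hx. pose proof PI_RGT_0 as Hpi.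
  replace (x - 0) with x by ring. replace (x - - PI) with (x + PI) by ring.
  rewrite neg_cos.
  assert (Hneg : forall y, PI/2 < y <= PI -> cos y < 0).
  { intros y Hy. rewrite <- cos_PI2. apply cos_decreasing_1; lra. }
  split; intro H.
  - exists 0%Z. simpl. rewrite Rmult_0_r, Rmult_0_l, Rplus_0_r.
    destruct (Rle_or_lt x (PI/2)) as [H1|H1].
    + destruct (Rle_or_lt (-(PI/2)) x) as [H2|H2]; [lra|].
      exfalso. apply H. pose proof (Hneg (-x)). rewrite cos_neg in H0. lra.
    + exfalso. apply H. pose proof (Hneg x). lra.
  - destruct (Rle_or_lt (PI/2) x) as [H1|H1].
    + exists 0%Z. simpl. lra.
    + destruct (Rle_or_lt x (-(PI/2))) as [H2|H2].
      * exists 1%Z. simpl. lra.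
      * exfalso. apply H. unfold Rgt. pose proof (cos_gt_0 x). lra.
Qed.

Lemma A1_correct (Q : R -> R) N out t :
  (1 <= N)%nat -> (forall a b, Q a > Q b <-> cos (t - a) > cos (t - b)) ->
  A1_output Q N out -> cos (PI / 2 ^ N) <= cos (t - out).
Proof.
  intros HN HQ HA. pose proof PI_RGT_0 as Hpi.
  destruct (reduce t) as [kt Ht]. set (t0 := t + 2 * IZR kt * PI) in *.
  assert (Ht0 : forall a, cos (t - a) = cos (t0 - a)).
  { intro a. rewrite <- (cosZ (t - a) kt). f_equal. unfold t0. ring. }
  destruct HA as (A & psi & psi' & HA1 & Hp1 & Hp1' & Hstep & Hout).
  assert (Inv : forall n, (1 <= n <= S N)%nat -> A n t0).
  { induction n as [|n IH]; intro Hn; [lia|].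
    destruct (Nat.eq_dec n 0) as [->|Hn0]; [apply HA1; lra|].
    assert (IHn : A n t0) by (apply IH; lia).
    destruct (Hstep n ltac:(lia)) as (Hgt & Hngt & _ & _).
    destruct (Rlt_dec (Q (psi' n)) (Q (psi n))) as [Hl|Hl].
    - apply (Hgt Hl). split; [exact IHn|].
      apply HQ in Hl. rewrite !Ht0 in Hl. unfold Rgt in Hl. lra.
    - apply (Hngt Hl). split; [exact IHn|].
      intro Hc. apply Hl. apply HQ. rewrite !Ht0. exact Hc. }
  assert (Len : forall j, (j <= N - 1)%nat ->
            psi (S (S j)) - psi' (S (S j)) <= PI / 2 ^ j).
  { induction j as [|j IH]; intro Hj.
    - destruct (Hstep 1%nat ltac:(lia)) as (Hgt & Hngt & Hord & Harc).
      simpl. rewrite Rdiv_1_r.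
      destruct (Rlt_dec (Q (psi' 1%nat)) (Q (psi 1%nat))) as [Hl|Hl].
      + apply Rle_trans with (PI/2 - - (PI/2)); [|lra].
        apply arc_len; [lra|lra|].
        intros x Hx Hin. pose proof (proj2 (Harc x) (conj Hx Hin)) as Hin2; clear Hin; rename Hin2 into Hin.
        apply (Hgt Hl) in Hin. destruct Hin as [_ Hc].
        rewrite Hp1, Hp1' in Hc. apply (proj1 (first_step x Hx)). exact Hc.
      + apply Rle_trans with ((PI/2 + PI) - PI/2); [|lra].
        apply arc_len; [lra|lra|].
        intros x Hx Hin. pose proof (proj2 (Harc x) (conj Hx Hin)) as Hin2; clear Hin; rename Hin2 into Hin.
        apply (Hngt Hl) in Hin. destruct Hin as [_ Hc].
        rewrite Hp1, Hp1' in Hc. apply (proj2 (first_step x Hx)). exact Hc.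
    - assert (IHj := IH ltac:(lia)).
      destruct (Hstep (S (S j)) ltac:(lia)) as (Hgt & Hngt & Hord & Harc).
      destruct (Hstep (S j) ltac:(lia)) as (_ & _ & Hord0 & Harc0).
      assert (H2j : 1 <= 2 ^ j) by (apply pow_R1_Rle; lra).
      assert (Hpj : PI / 2 ^ j <= PI).
      { unfold Rdiv. rewrite <- (Rmult_1_r PI) at 2. apply Rmult_le_compat_l; [lra|].
        rewrite <- Rinv_1. apply Rinv_le_contravar; lra. }
      set (p := psi (S (S j))) in *. set (p' := psi' (S (S j))) in *.
      assert (HL : 0 <= p - p' <= PI) by lra.
      assert (Hdiv : PI / 2 ^ S j = PI / 2 ^ j / 2) by (simpl; field; lra).
      rewrite Hdiv.
      destruct (Rlt_dec (Q p') (Q p)) as [Hl|Hl].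
      + assert (E : p - p' = p - (p' + (p - p') / 2) + (p - p')/2) by field.
        apply Rle_trans with (p - (p' + (p - p') / 2)); [|lra].
        apply arc_len; [lra|lra|].
        intros x Hx Hin. pose proof (proj2 (Harc x) (conj Hx Hin)) as Hin2; clear Hin; rename Hin2 into Hin.
        apply (Hgt Hl) in Hin. destruct Hin as [Hin Hc].
        apply (proj1 (Harc0 x)) in Hin. destruct Hin as [_ Hin].
        apply (proj1 (half_step p p' x HL Hin)). exact Hc.
      + apply Rle_trans with ((p' + (p - p') / 2) - p'); [|lra].
        apply arc_len; [lra|lra|].
        intros x Hx Hin. pose proof (proj2 (Harc x) (conj Hx Hin)) as Hin2; clear Hin; rename Hin2 into Hin.
        apply (Hngt Hl) in Hin. destruct Hin as [Hin Hc].
        apply (proj1 (Harc0 x)) in Hin. destruct Hin as [_ Hin].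
        apply (proj2 (half_step p p' x HL Hin)). exact Hc. }
  destruct N as [|N']; [lia|].
  pose proof (Len N' ltac:(lia)) as HL.
  destruct (Hstep (S N') ltac:(lia)) as (_ & _ & Hord & Harc).
  pose proof (Inv (S (S N')) ltac:(lia)) as Hin.
  apply (proj1 (Harc _)) in Hin. destruct Hin as [_ [j Hj]].
  rewrite Ht0, <- (cosZ (t0 - out) j).
  set (d := t0 - out + 2 * IZR j * PI).
  assert (H2j : 1 <= 2 ^ N') by (apply pow_R1_Rle; lra).
  assert (Hdiv : PI / 2 ^ S N' = PI / 2 ^ N' / 2) by (simpl; field; lra).
  assert (Hpj : PI / 2 ^ N' <= PI).
  { unfold Rdiv. rewrite <- (Rmult_1_r PI) at 2. apply Rmult_le_compat_l; [lra|].
    rewrite <- Rinv_1. apply Rinv_le_contravar; lra. }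
  assert (Hpos : 0 < PI / 2 ^ N') by (apply Rdiv_lt_0_compat; lra).
  assert (Hd : Rabs d <= PI / 2 ^ S N').
  { rewrite Hdiv. unfold d. rewrite Hout. apply Rabs_le. lra. }
  assert (Hc : cos d = cos (Rabs d)).
  { unfold Rabs. destruct (Rcase_abs d); [rewrite cos_neg|]; reflexivity. }
  rewrite Hc.
  destruct (Rle_lt_or_eq_dec _ _ Hd) as [Hlt|Heq]; [|rewrite Heq; lra].
  left. apply cos_decreasing_1; try lra. apply Rabs_pos.
Qed.

Lemma polar X Y : 0 < X^2 + Y^2 -> exists rho,
  X = sqrt (X^2 + Y^2) * cos rho /\ Y = sqrt (X^2 + Y^2) * sin rho.
Proof.
  intro H. set (r := sqrt (X^2 + Y^2)).
  assert (Hr : 0 < r) by (apply sqrt_lt_R0; lra).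
  assert (Hr2 : r * r = X^2 + Y^2) by (apply sqrt_sqrt; lra).
  assert (HB : -1 <= X / r <= 1).
  { assert (Hx : X^2 <= r^2) by nra.
    split.
    - apply (Rmult_le_reg_r r); [lra|]. unfold Rdiv. rewrite Rmult_assoc, Rinv_l by lra. nra.
    - apply (Rmult_le_reg_r r); [lra|]. unfold Rdiv. rewrite Rmult_assoc, Rinv_l by lra. nra. }
  assert (Hs : sqrt (1 - (X / r)²) = Rabs Y / r).
  { replace (1 - (X / r)²) with ((Y / r)²).
    - rewrite sqrt_Rsqr_abs. unfold Rdiv. rewrite Rabs_mult, (Rabs_right (/ r)); [reflexivity|].
      left. apply Rinv_0_lt_compat. lra.
    - unfold Rsqr. field_simplify_eq; [|lra]. nra. }
  destruct (Rle_or_lt 0 Y) as [HY|HY].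
  - exists (acos (X / r)). rewrite cos_acos, sin_acos, Hs by exact HB.
    rewrite Rabs_right by lra. split; field; lra.
  - exists (- acos (X / r)). rewrite cos_neg, sin_neg, cos_acos, sin_acos, Hs by exact HB.
    rewrite Rabs_left by lra. split; field; lra.
Qed.

Lemma step_align P beta theta phibar N k :
  0 < P -> 0 < beta (S k) -> (1 <= N)%nat ->
  A1_output (Qm P beta theta phibar (S k)) N (phibar (S k)) ->
  cos (PI / 2 ^ N) *
    sqrt (rsum k (fun i => sqrt (beta i) * cos (phibar i - theta i)) ^ 2 +
          rsum k (fun i => sqrt (beta i) * sin (phibar i - theta i)) ^ 2)
  <= rsum k (fun i => sqrt (beta i) * cos (phibar i - theta i)) * cos (phibar (S k) - theta (S k))
   + rsum k (fun i => sqrt (beta i) * sin (phibar i - theta i)) * sin (phibar (S k) - theta (S k)).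
Proof.
  intros HP Hb HN HA.
  set (X := rsum k (fun i => sqrt (beta i) * cos (phibar i - theta i))) in *.
  set (Y := rsum k (fun i => sqrt (beta i) * sin (phibar i - theta i))) in *.
  destruct (Rle_lt_or_eq_dec 0 (X^2 + Y^2)) as [Hpos|H0]; [nra| |].
  2:{ assert (X = 0) by nra. assert (Y = 0) by nra. rewrite <- H0, sqrt_0. nra. }
  destruct (polar X Y Hpos) as [rho [HX HY]].
  set (r := sqrt (X^2 + Y^2)) in *.
  assert (Hr : 0 < r) by (apply sqrt_lt_R0; lra).
  set (s := sqrt (beta (S k))).
  assert (Hs : 0 < s) by (apply sqrt_lt_R0; lra).
  assert (Hs2 : s ^ 2 = beta (S k)) by (apply pow2_sqrt; lra).
  set (t := theta (S k) + rho).
  assert (Qf : forall phi, Qm P beta theta phibar (S k) phi =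
     P * (beta (S k) + r^2) + (2 * P * s * r) * cos (t - phi)).
  { intro phi. unfold Qm. replace (S k - 1)%nat with k by lia. fold X Y. fold s.
    replace (t - phi) with (rho - (phi - theta (S k))) by (unfold t; ring).
    set (u := phi - theta (S k)). rewrite (cos_minus rho u).
    pose proof (sin2_cos2 u) as E1. pose proof (sin2_cos2 rho) as E2. unfold Rsqr in *.
    rewrite <- Hs2. rewrite HX, HY at 1. ring_simplify.
    replace (sin u ^ 2) with (1 - cos u ^ 2) by nra.
    replace (sin rho ^ 2) with (1 - cos rho ^ 2) by nra. ring. }
  assert (HQ : forall a b, Qm P beta theta phibar (S k) a > Qm P beta theta phibar (S k) b
                 <-> cos (t - a) > cos (t - b)).
  { intros a b. rewrite !Qf. assert (0 < 2 * P * s * r) by (repeat apply Rmult_lt_0_compat; lra).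
    split; intro; nra. }
  pose proof (A1_correct _ N _ t HN HQ HA) as Hc.
  replace (X * cos (phibar (S k) - theta (S k)) + Y * sin (phibar (S k) - theta (S k)))
    with (r * cos (t - phibar (S k))).
  - nra.
  - replace (t - phibar (S k)) with (rho - (phibar (S k) - theta (S k))) by (unfold t; ring).
    rewrite (cos_minus rho). rewrite HX, HY at 1. ring.
Qed.

Lemma rsum_ext n f g : (forall i, (1 <= i <= n)%nat -> f i = g i) -> rsum n f = rsum n g.
Proof.
  induction n; intro H; simpl; [reflexivity|].
  rewrite IHn by (intros; apply H; lia). rewrite H by lia. reflexivity.
Qed.

Lemma rsum_plus n f g : rsum n (fun i => f i + g i) = rsum n f + rsum n g.
Proof. induction n; simpl; [ring|]. rewrite IHn. ring. Qed.

Lemma rsum_minus n f g : rsum n (fun i => f i - g i) = rsum n f - rsum n g.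
Proof. induction n; simpl; [ring|]. rewrite IHn. ring. Qed.

Lemma rsum_mult_l n c f : rsum n (fun i => c * f i) = c * rsum n f.
Proof. induction n; simpl; [ring|]. rewrite IHn. ring. Qed.

Lemma rsum_mult_r n c f : rsum n (fun i => f i * c) = rsum n f * c.
Proof. induction n; simpl; [ring|]. rewrite IHn. ring. Qed.

Lemma rsum_prod n u v :
  rsum n (fun i => rsum n (fun j => u i * v j)) = rsum n u * rsum n v.
Proof.
  rewrite <- rsum_mult_r. apply rsum_ext. intros i _. apply rsum_mult_l.
Qed.

Lemma inner_off (g : nat -> R) i n : (1 <= i)%nat ->
  rsum n (fun j => if Nat.eqb i j then 0 else g j) = rsum n g - (if Nat.leb i n then g i else 0).
Proof.
  intro Hi. induction n; simpl.
  - destruct i; [lia|]. simpl. ring.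
  - rewrite IHn. destruct (Nat.eqb_spec i (S n)) as [->|Hne].
    + rewrite Nat.leb_refl. replace (Nat.leb (S n) n) with false
        by (symmetry; apply Nat.leb_gt; lia). ring.
    + destruct (Nat.leb_spec i n); destruct (Nat.leb_spec i (S n)); try lia; ring.
Qed.

Lemma offdiag_eq M g : offdiag_sum M g =
  rsum M (fun i => rsum M (g i)) - rsum M (fun i => g i i).
Proof.
  unfold offdiag_sum. rewrite <- rsum_minus. apply rsum_ext. intros i Hi.
  rewrite (inner_off (g i) i M) by lia.
  replace (Nat.leb i M) with true by (symmetry; apply Nat.leb_le; lia). reflexivity.
Qed.

Lemma offdiag_mult_r M g c : offdiag_sum M (fun i j => g i j * c) = offdiag_sum M g * c.
Proof.
  rewrite !offdiag_eq. rewrite Rmult_minus_distr_r, <- !rsum_mult_r.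
  f_equal. apply rsum_ext. intros. apply rsum_mult_r.
Qed.

Lemma rsum_nonneg n f : (forall i, (1 <= i <= n)%nat -> 0 <= f i) -> 0 <= rsum n f.
Proof.
  induction n; intro H; simpl; [lra|].
  assert (0 <= rsum n f) by (apply IHn; intros; apply H; lia).
  assert (0 <= f (S n)) by (apply H; lia). lra.
Qed.

Lemma rsum_pos n f : (1 <= n)%nat -> (forall i, (1 <= i <= n)%nat -> 0 < f i) -> 0 < rsum n f.
Proof.
  intros Hn H. destruct n; [lia|]. simpl.
  assert (0 <= rsum n f) by (apply rsum_nonneg; intros; left; apply H; lia).
  assert (0 < f (S n)) by (apply H; lia). lra.
Qed.

Theorem proposition1 (M N : nat) (P : R) (beta theta phibar : nat -> R) :
  (2 <= M)%nat -> (1 <= N)%nat -> 0 < P ->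
  (forall m, (1 <= m <= M)%nat -> 0 < beta m) ->
  (forall m, (1 <= m <= M)%nat -> -PI <= theta m < PI) ->
  protocol M N P beta theta phibar ->
  Qd M P beta theta phibar / Qstar M P beta >=
  P / Qstar M P beta *
    (rsum M beta
     + offdiag_sum M (fun i j => sqrt (beta i * beta j) * (cos (PI / 2 ^ N)) ^ 2)).
Proof.
  intros HM HN HP Hb Hth [Hphi1 Hprot].
  pose proof PI_RGT_0 as Hpi.
  set (c := cos (PI / 2 ^ N)).
  assert (H2N : 2 <= 2 ^ N).
  { destruct N as [|N']; [lia|]. simpl. assert (1 <= 2 ^ N') by (apply pow_R1_Rle; lra). lra. }
  assert (Hc0 : 0 <= c).
  { apply cos_ge_0.
    - assert (0 < PI / 2 ^ N) by (apply Rdiv_lt_0_compat; lra). lra.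
    - unfold Rdiv. apply Rmult_le_compat_l; [lra|]. apply Rinv_le_contravar; lra. }
  assert (Hc1 : c <= 1) by (unfold c; apply COS_bound).
  set (a := fun i => sqrt (beta i) * cos (phibar i - theta i)).
  set (b := fun i => sqrt (beta i) * sin (phibar i - theta i)).
  set (sb := fun i => sqrt (beta i)).
  assert (Key : forall m, (1 <= m <= M)%nat ->
     rsum m a ^ 2 + rsum m b ^ 2 >= rsum m beta + c ^ 2 * (rsum m sb ^ 2 - rsum m beta)).
  { induction m as [|m IH]; intro Hm; [lia|].
    destruct (Nat.eq_dec m 0) as [->|Hm0].
    - simpl. unfold a, b, sb.
      pose proof (sin2_cos2 (phibar 1%nat - theta 1%nat)) as E. unfold Rsqr in E.
      assert (Hs2 : sqrt (beta 1%nat) ^ 2 = beta 1%nat) by (apply pow2_sqrt; left; apply Hb; lia).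
      set (s1 := sqrt (beta 1%nat)) in *. rewrite <- Hs2. nra.
    - assert (IHm := IH ltac:(lia)).
      pose proof (step_align P beta theta phibar N m HP (Hb (S m) ltac:(lia)) HN
                    (Hprot (S m) ltac:(lia))) as Hal.
      fold c in Hal. fold a b in Hal.
      simpl rsum.
      set (X := rsum m a) in *. set (Y := rsum m b) in *.
      set (B := rsum m beta) in *. set (Sm := rsum m sb) in *.
      set (r := sqrt (X ^ 2 + Y ^ 2)) in *.
      assert (HB : 0 <= B) by (apply rsum_nonneg; intros; left; apply Hb; lia).
      assert (HS : 0 <= Sm) by (apply rsum_nonneg; intros; apply sqrt_pos).
      assert (Hr0 : 0 <= r) by apply sqrt_pos.
      assert (Hr2 : r * r = X ^ 2 + Y ^ 2) by (apply sqrt_sqrt; nra).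
      assert (HrS : c * Sm <= r).
      { assert (0 <= (1 - c^2) * B) by (apply Rmult_le_pos; nra).
        assert (c * Sm * (c * Sm) <= r * r) by nra.
        destruct (Rle_or_lt (c * Sm) r) as [|Hlt]; [assumption|].
        exfalso. assert (0 <= c * Sm) by nra. nra. }
      set (al := phibar (S m) - theta (S m)) in *.
      set (s := sqrt (beta (S m))).
      assert (Hs0 : 0 <= s) by apply sqrt_pos.
      assert (Hs2 : s ^ 2 = beta (S m)) by (apply pow2_sqrt; left; apply Hb; lia).
      pose proof (sin2_cos2 al) as E. unfold Rsqr in E.
      unfold a, b, sb. fold s al.
      set (W := X * cos al + Y * sin al) in *.
      assert (H1 : s * W >= s * c * (c * Sm)).
      { assert (s * W >= s * (c * r)) by (apply Rle_ge, Rmult_le_compat_l; lra).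
        assert (s * (c * r) >= s * (c * (c * Sm))).
        { apply Rle_ge, Rmult_le_compat_l; [lra|]. apply Rmult_le_compat_l; lra. }
        lra. }
      assert (Ex : (X + s * cos al) ^ 2 + (Y + s * sin al) ^ 2 = X ^ 2 + Y ^ 2 + s ^ 2 + 2 * (s * W)).
      { transitivity (X ^ 2 + Y ^ 2 + s ^ 2 * (sin al * sin al + cos al * cos al) + 2 * (s * W));
          [unfold W; ring | rewrite E; ring]. }
      rewrite Ex, <- Hs2. nra. }
  assert (Hsq : forall i, (1 <= i <= M)%nat -> sqrt (beta i * beta i) = beta i).
  { intros i Hi. apply sqrt_square. left. apply Hb. exact Hi. }
  assert (Hmul : forall i j, (1 <= i <= M)%nat -> (1 <= j <= M)%nat ->
            sqrt (beta i * beta j) = sb i * sb j).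
  { intros i j Hi Hj. apply sqrt_mult; left; apply Hb; assumption. }
  assert (ID1 : rsum M beta + offdiag_sum M (fun i j => sqrt (beta i * beta j) *
            cos ((phibar i - theta i) - (phibar j - theta j))) = rsum M a ^ 2 + rsum M b ^ 2).
  { rewrite offdiag_eq.
    assert (Dg : rsum M (fun i => sqrt (beta i * beta i) *
                   cos ((phibar i - theta i) - (phibar i - theta i))) = rsum M beta).
    { apply rsum_ext. intros i Hi. rewrite Hsq by exact Hi.
      rewrite Rminus_diag, cos_0. ring. }
    rewrite Dg.
    assert (Off : rsum M (fun i => rsum M (fun j => sqrt (beta i * beta j) *
                   cos ((phibar i - theta i) - (phibar j - theta j))))
                 = rsum M (fun i => rsum M (fun j => a i * a j) + rsum M (fun j => b i * b j))).
    { apply rsum_ext. intros i Hi. rewrite <- rsum_plus. apply rsum_ext. intros j Hj.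
      rewrite Hmul by assumption. rewrite cos_minus. unfold a, b, sb. ring. }
    rewrite Off, rsum_plus, !rsum_prod. ring. }
  assert (ID2 : offdiag_sum M (fun i j => sqrt (beta i * beta j)) = rsum M sb ^ 2 - rsum M beta).
  { rewrite offdiag_eq. rewrite (rsum_ext M (fun i => sqrt (beta i * beta i)) beta) by exact Hsq.
    rewrite (rsum_ext M (fun i => rsum M (fun j => sqrt (beta i * beta j)))
               (fun i => rsum M (fun j => sb i * sb j))).
    - rewrite rsum_prod. ring.
    - intros i Hi. apply rsum_ext. intros j Hj. apply Hmul; assumption. }
  rewrite (offdiag_mult_r M (fun i j => sqrt (beta i * beta j))), ID2.
  unfold Qd, Qstar. rewrite ID1, ID2. fold c.
  assert (HSp : 0 < rsum M sb).
  { apply rsum_pos; [lia|]. intros i Hi. apply sqrt_lt_R0. apply Hb. exact Hi. }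
  assert (HK := Key M ltac:(lia)).
  set (D := rsum M a ^ 2 + rsum M b ^ 2) in *.
  set (Qs := P * (rsum M beta + (rsum M sb ^ 2 - rsum M beta))).
  assert (HQs : 0 < Qs) by (unfold Qs; replace (rsum M beta + (rsum M sb ^ 2 - rsum M beta)) with (rsum M sb ^ 2) by ring; apply Rmult_lt_0_compat; [lra | apply pow_lt; lra]).
  assert (Hiq : 0 < / Qs) by (apply Rinv_0_lt_compat; exact HQs).
  unfold Rdiv.
  assert (0 < P * / Qs) by (apply Rmult_lt_0_compat; assumption).
  nra.
Qed.
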